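(* Let $i\in\mathcal N$, let $\mathbf l_i$ be an $m$-cell configuration of $i$, let $\ell\in\mathcal N_i$ and let $\mathbf l_\ell$ be any $m$-cell configuration of $\ell$ consistent with $\mathbf l_i$. Let $t^*$ be the unique positive solution of $$e^{L_2t^*}-\Big(L_2+\frac{L_2^2}{L_1\sqrt{N_{\max}}}\Big)t^*-1=0,\qquad N_{\max}:=\max\{N_i:i\in\mathcal N\}.$$ Then for every $\kappa\in\bar{\mathcal N}_\ell^{m-1}$ (note $\bar{\mathcal N}_\ell^{m-1}\subset\bar{\mathcal N}_i^m$), $$|\chi_\kappa^{[i]}(t)-\chi_\kappa^{[\ell]}(t)|\le Mt\quad\text{for all }t\in[0,t^*],$$ where $\chi_\kappa^{[i]}$ and $\chi_\kappa^{[\ell]}$ are computed from $\mathbf l_i$ and $\mathbf l_\ell$ respectively.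
   Context: Graph notions: $\mathcal N=\{1,\dots,N\}$ is a finite set of agents, agent $i$ has neighbor set $\mathcal N_i\subset\mathcal N\setminus\{i\}$ of cardinality $N_i$; $\mathcal G=(\mathcal N,\mathcal E)$ with $(\ell,i)\in\mathcal E$ iff $\ell\in\mathcal N_i$; a path of length $m$ is a sequence $i_0\cdots i_m$ with $(i_{k-1},i_k)\in\mathcal E$. For $m\ge1$, $\mathcal N_i^m$ is the set of agents $j\ne i$ having a path of length $m$ to $i$ and no shorter path to $i$; $\mathcal N_i^0=\{i\}$; $\bar{\mathcal N}_i^m=\bigcup_{k=0}^m\mathcal N_i^k$, of cardinality $\bar N_i^m$. Dynamics: each agent has state $x_i\in\mathbb R^n$ and drift $f_i(x_i,\mathbf x_j)$, $\mathbf x_j=(x_{j_1},\dots,x_{j_{N_i}})$ listing the neighbors' states in a fixed order. There are constants $M,L_1,L_2>0$ with $|f_i(x_i,\mathbf x_j)|\le M$, $|f_i(x_i,\mathbf x_j)-f_i(x_i,\mathbf y_j)|\le L_1|\mathbf x_j-\mathbf y_j|$ and $|f_i(x_i,\mathbf x_j)-f_i(y_i,\mathbf x_j)|\le L_2|x_i-y_i|$ for all $x_i,y_i\in\mathbb R^n$, $\mathbf x_j,\mathbf y_j\in\mathbb R^{N_in}$, $i\in\mathcal N$. Cells and reference trajectories: a cell decomposition $\mathcal S=\{S_l\}_{l\in\mathcal I}$ of $\mathbb R^n$ ($\mathcal I$ finite or countable) is a family of uniformly bounded connected sets with pairwise disjoint interiors whose union is $\mathbb R^n$; a reference point $x_{l,G}\in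 S_l$ is fixed for each $l$. Fix the degree of decentralization $m\ge1$. An $m$-cell configuration of agent $i$ is a tuple $\mathbf l_i=(l_\kappa)_{\kappa\in\bar{\mathcal N}_i^m}\in\mathcal I^{\bar N_i^m}$. Given $\mathbf l_i$, define $\chi_\kappa^{[i]}:[0,\infty)\to\mathbb R^n$ for $\kappa\in\bar{\mathcal N}_i^m$ as follows. Case (i), $\mathcal N_i^{m+1}=\emptyset$: $\dot\chi_\kappa^{[i]}(t)=f_\kappa(\chi_\kappa^{[i]}(t),\boldsymbol\chi_{j(\kappa)}^{[i]}(t))$, $\chi_\kappa^{[i]}(0)=x_{l_\kappa,G}$, for all $\kappa\in\bar{\mathcal N}_i^m$, where $\boldsymbol\chi_{j(\kappa)}^{[i]}$ lists $\chi_\nu^{[i]}$, $\nu\in\mathcal N_\kappa$ (these $\nu$ lie in $\bar{\mathcal N}_i^m$). Case (ii), $\mathcal N_i^{m+1}\ne\emptyset$: the same ODE and initial conditions for $\kappa\in\bar{\mathcal N}_i^{m-1}$, while $\chi_\kappa^{[i]}(t):=x_{l_\kappa,G}$ for all $t\ge0$ and $\kappa\in\mathcal N_i^m$. For $\ell\in\mathcal N_i$, an $m$-cell configuration $\mathbf l_\ell=(\bar l_\kappa)_{\kappa\in\bar{\mathcal N}_\ell^m}$ of $\ell$ is consistent with $\mathbf l_i=(l_\kappa)_{\kappa\in\bar{\mathcal N}_i^m}$ if $l_\kappa=\bar l_\kappa$ for all $\kappa\in\bar{\mathcal N}_i^m\cap\bar{\mathcal N}_\ell^m$. *)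

(* Defs.v *)
From Stdlib Require Import Reals List Lia.
Open Scope R_scope.

(** Points of R^n are represented by [nat -> R]; only components [c < n] matter.
    [inRn n x] singles out the canonical representatives (zero beyond n). *)
Definition vec := nat -> R.

Fixpoint sumR (k : nat) (g : nat -> R) : R :=
  match k with O => 0 | S k' => sumR k' g + g k' end.

Definition vdist (n : nat) (x y : vec) : R := sqrt (sumR n (fun c => (x c - y c) ^ 2)).
Definition vnorm (n : nat) (x : vec) : R := vdist n x (fun _ => 0).

(** Euclidean distance in R^{k n} between stacked vectors (lists of k points). *)
Definition sdist (n : nat) (xs ys : list vec) : R :=
  sqrt (fold_right Rplus 0 (map (fun p => (vdist n (fst p) (snd p)) ^ 2) (combine xs ys))).

Definition inRn (n : nat) (x : vec) : Prop := forall c, (n <= c)%nat -> x c = 0.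

(** Agents are 0..N-1; [nbr i] is the neighbour set N_i listed in the fixed order. *)
Definition graph_ok (N : nat) (nbr : nat -> list nat) : Prop :=
  forall i, (i < N)%nat ->
    NoDup (nbr i) /\ ~ In i (nbr i) /\ (forall j, In j (nbr i) -> (j < N)%nat).

(** [walk nbr j i k]: there is a path j = i_0 ... i_k = i of length k,
    with (i_{r-1}, i_r) in E, i.e. i_{r-1} in N_{i_r}. *)
Fixpoint walk (nbr : nat -> list nat) (j i : nat) (k : nat) : Prop :=
  match k with
  | O => j = i
  | S k' => exists l, In l (nbr i) /\ walk nbr j l k'
  end.

Definition layer (nbr : nat -> list nat) (i k j : nat) : Prop :=
  walk nbr j i k /\ forall k', (k' < k)%nat -> ~ walk nbr j i k'.

Definition ball_layer (nbr : nat -> list nat) (i k j : nat) : Prop :=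
  exists k', (k' <= k)%nat /\ layer nbr i k' j.

Definition Nmax (N : nat) (nbr : nat -> list nat) : nat :=
  fold_right Nat.max 0%nat (map (fun i => length (nbr i)) (seq 0 N)).

Definition drift_ok (N n : nat) (nbr : nat -> list nat)
    (f : nat -> vec -> list vec -> vec) (M L1 L2 : R) : Prop :=
  forall i, (i < N)%nat ->
    (forall x xs, length xs = length (nbr i) -> vnorm n (f i x xs) <= M) /\
    (forall x xs ys, length xs = length (nbr i) -> length ys = length (nbr i) ->
       vdist n (f i x xs) (f i x ys) <= L1 * sdist n xs ys) /\
    (forall x y xs, length xs = length (nbr i) ->
       vdist n (f i x xs) (f i y xs) <= L2 * vdist n x y).

Definition open_Rn (n : nat) (U : vec -> Prop) : Prop :=
  forall x, inRn n x -> U x ->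
    exists r, 0 < r /\ forall y, inRn n y -> vdist n x y < r -> U y.

Definition interior_Rn (n : nat) (A : vec -> Prop) (x : vec) : Prop :=
  inRn n x /\ exists r, 0 < r /\ forall y, inRn n y -> vdist n x y < r -> A y.

Definition connected_Rn (n : nat) (A : vec -> Prop) : Prop :=
  forall U V, open_Rn n U -> open_Rn n V ->
    (forall x, A x -> U x \/ V x) -> (forall x, A x -> U x -> V x -> False) ->
    (forall x, A x -> U x) \/ (forall x, A x -> V x).

(** S : I -> set of R^n is a cell decomposition (I finite or countable),
    and xG l is a reference point in S l. *)
Definition cell_decomposition (n : nat) (I : Type) (S : I -> vec -> Prop) (xG : I -> vec) : Prop :=
  (exists enc : I -> nat, forall a b, enc a = enc b -> a = b) /\
  (forall l x, S l x -> inRn n x) /\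
  (exists B, forall l x y, S l x -> S l y -> vdist n x y <= B) /\
  (forall l, connected_Rn n (S l)) /\
  (forall l l' x, l <> l' -> interior_Rn n (S l) x -> interior_Rn n (S l') x -> False) /\
  (forall x, inRn n x -> exists l, S l x) /\
  (forall l, S l (xG l)).

Definition solves_ode (n : nat) (nbr : nat -> list nat) (f : nat -> vec -> list vec -> vec)
    (chi : nat -> R -> vec) (k : nat) : Prop :=
  (forall c, (c < n)%nat -> forall t, 0 < t ->
     derivable_pt_lim (fun s => chi k s c) t
       (f k (chi k t) (map (fun nu => chi nu t) (nbr k)) c)) /\
  (forall c, (c < n)%nat -> forall eps, 0 < eps ->
     exists delta, 0 < delta /\
       forall s, 0 <= s < delta -> Rabs (chi k s c - chi k 0 c) < eps).

Definition ref_traj (n : nat) (nbr : nat -> list nat) (f : nat -> vec -> list vec -> vec)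
    (I : Type) (xG : I -> vec) (m i : nat) (li : nat -> I) (chi : nat -> R -> vec) : Prop :=
  ((forall j, ~ layer nbr i (S m) j) ->
     forall k, ball_layer nbr i m k ->
       solves_ode n nbr f chi k /\ (forall c, (c < n)%nat -> chi k 0 c = xG (li k) c)) /\
  ((exists j, layer nbr i (S m) j) ->
     (forall k, ball_layer nbr i (m - 1) k ->
        solves_ode n nbr f chi k /\ (forall c, (c < n)%nat -> chi k 0 c = xG (li k) c)) /\
     (forall k, layer nbr i m k -> forall t, 0 <= t ->
        forall c, (c < n)%nat -> chi k t c = xG (li k) c)).

Definition consistent (I : Type) (nbr : nat -> list nat) (m i l : nat) (li ll : nat -> I) : Prop :=
  forall k, ball_layer nbr i m k -> ball_layer nbr l m k -> li k = ll k.

(* Main.v *)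
Require Import Defs.
From Stdlib Require Import Reals List Lra Lia Psatz Classical.
From Coquelicot Require Import Coquelicot.
Open Scope R_scope.

Lemma sumR_ext k g h : (forall c, (c < k)%nat -> g c = h c) -> sumR k g = sumR k h.
Proof. induction k; simpl; intros H; auto. rewrite IHk by (intros; apply H; lia). rewrite H by lia; auto. Qed.

Lemma sumR_nonneg k g : (forall c, (c < k)%nat -> 0 <= g c) -> 0 <= sumR k g.
Proof. induction k; simpl; intros H; [lra|]. pose proof (H k ltac:(lia)). pose proof (IHk ltac:(intros; apply H; lia)). lra. Qed.

Lemma sumR_le k g h : (forall c, (c < k)%nat -> g c <= h c) -> sumR k g <= sumR k h.
Proof. induction k; simpl; intros H; [lra|]. pose proof (H k ltac:(lia)). pose proof (IHk ltac:(intros; apply H; lia)). lra. Qed.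

Lemma sumR_plus k g h : sumR k (fun c => g c + h c) = sumR k g + sumR k h.
Proof. induction k; simpl; lra. Qed.

Lemma sumR_scal k a g : sumR k (fun c => a * g c) = a * sumR k g.
Proof. induction k; simpl; [lra|]. rewrite IHk; lra. Qed.

Lemma sumR_const k a : sumR k (fun _ => a) = INR k * a.
Proof. induction k; simpl sumR; [simpl; lra|]. rewrite IHk, S_INR; lra. Qed.

Lemma two_ab_le A B P a b : 0 <= A -> 0 <= B -> P^2 <= A * B ->
  2 * P * a * b <= A * b^2 + B * a^2.
Proof.
  intros HA HB HP.
  assert (Hx : 0 <= A * b^2 + B * a^2) by nra.
  assert (Hsq : (2*P*a*b)^2 <= (A * b^2 + B * a^2)^2).
  { assert (0 <= (A*b^2 - B*a^2)^2) by apply pow2_ge_0.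
    assert (4*P^2*(a^2*b^2) <= 4*(A*B)*(a^2*b^2)) by (apply Rmult_le_compat_r; [nra|lra]).
    nra. }
  destruct (Rle_or_lt (2*P*a*b) 0) as [H|H]; [lra|].
  nra.
Qed.

Lemma CS k u v : (sumR k (fun c => u c * v c))^2 <= sumR k (fun c => u c ^2) * sumR k (fun c => v c ^2).
Proof.
  induction k; cbn [sumR]; [lra|].
  set (P := sumR k (fun c => u c * v c)) in *.
  set (A := sumR k (fun c => u c ^2)) in *.
  set (B := sumR k (fun c => v c ^2)) in *.
  assert (0 <= A) by (apply sumR_nonneg; intros; apply pow2_ge_0).
  assert (0 <= B) by (apply sumR_nonneg; intros; apply pow2_ge_0).
  pose proof (two_ab_le A B P (u k) (v k) H H0 IHk).
  replace ((P + u k * v k)^2) with (P^2 + 2*P*u k*v k + (u k * v k)^2) by ring.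
  replace ((A + u k ^2) * (B + v k ^2)) with (A*B + (A * v k ^2 + B * u k^2) + (u k * v k)^2) by ring.
  lra.
Qed.

Lemma sqrt_sq_le x y : 0 <= y -> x^2 <= y^2 -> x <= y.
Proof. intros. nra. Qed.

Lemma CS' k u v : sumR k (fun c => u c * v c) <= sqrt (sumR k (fun c => u c ^2)) * sqrt (sumR k (fun c => v c ^2)).
Proof.
  assert (HA : 0 <= sumR k (fun c => u c ^2)) by (apply sumR_nonneg; intros; apply pow2_ge_0).
  assert (HB : 0 <= sumR k (fun c => v c ^2)) by (apply sumR_nonneg; intros; apply pow2_ge_0).
  apply sqrt_sq_le. apply Rmult_le_pos; apply sqrt_pos.
  rewrite Rpow_mult_distr, !pow2_sqrt by auto. apply CS.
Qed.

Lemma Mink k u v : sqrt (sumR k (fun c => (u c + v c)^2)) <=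
   sqrt (sumR k (fun c => u c ^2)) + sqrt (sumR k (fun c => v c ^2)).
Proof.
  assert (HA : 0 <= sumR k (fun c => u c ^2)) by (apply sumR_nonneg; intros; apply pow2_ge_0).
  assert (HB : 0 <= sumR k (fun c => v c ^2)) by (apply sumR_nonneg; intros; apply pow2_ge_0).
  apply sqrt_sq_le. pose proof (sqrt_pos (sumR k (fun c => u c ^2))); pose proof (sqrt_pos (sumR k (fun c => v c ^2))); lra.
  rewrite pow2_sqrt by (apply sumR_nonneg; intros; apply pow2_ge_0).
  replace (sumR k (fun c => (u c + v c)^2)) with
     (sumR k (fun c => u c ^2) + 2 * sumR k (fun c => u c * v c) + sumR k (fun c => v c ^2)).
  2:{ rewrite <- sumR_scal, <- !sumR_plus. apply sumR_ext; intros; ring. }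
  pose proof (CS' k u v).
  replace ((sqrt (sumR k (fun c => u c ^ 2)) + sqrt (sumR k (fun c => v c ^ 2))) ^ 2) with
   (sqrt (sumR k (fun c => u c ^ 2))^2 + 2 * (sqrt (sumR k (fun c => u c ^ 2)) * sqrt (sumR k (fun c => v c ^ 2))) + sqrt (sumR k (fun c => v c ^ 2))^2) by ring.
  rewrite !pow2_sqrt by auto. lra.
Qed.

Lemma vdist_nonneg n x y : 0 <= vdist n x y.
Proof. apply sqrt_pos. Qed.

Lemma vdist_sym n x y : vdist n x y = vdist n y x.
Proof. unfold vdist. f_equal. apply sumR_ext; intros; ring. Qed.

Lemma vdist_tri n x y z : vdist n x z <= vdist n x y + vdist n y z.
Proof.
  unfold vdist. replace (sumR n (fun c => (x c - z c)^2)) with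
    (sumR n (fun c => ((x c - y c) + (y c - z c))^2)) by (apply sumR_ext; intros; ring).
  apply (Mink n (fun c => x c - y c) (fun c => y c - z c)).
Qed.

Lemma vdist_eq0 n x y : (forall c, (c < n)%nat -> x c = y c) -> vdist n x y = 0.
Proof. intros H. unfold vdist. rewrite (sumR_ext _ _ (fun _ => 0)). 
  - rewrite sumR_const, Rmult_0_r. apply sqrt_0.
  - intros. rewrite H by auto. ring. Qed.

Lemma vdist_le_bound n x y b : 0 <= b -> (forall c, (c < n)%nat -> Rabs (x c - y c) <= b) -> vdist n x y <= sqrt (INR n) * b.
Proof.
  intros Hb H. unfold vdist.
  replace (sqrt (INR n) * b) with (sqrt (INR n * b^2)).
  2:{ rewrite sqrt_mult by (auto using pos_INR, pow2_ge_0). rewrite sqrt_pow2 by auto. auto. }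
  apply sqrt_le_1_alt. rewrite <- sumR_const. apply sumR_le. intros c Hc. specialize (H c Hc).
  pose proof (Rabs_pos (x c - y c)).
  replace ((x c - y c)^2) with (Rabs (x c - y c) ^2). nra.
  rewrite <- !Rsqr_pow2. symmetry; apply Rsqr_abs.
Qed.

Definition nrm (n : nat) (z : vec) : R := sqrt (sumR n (fun c => z c ^ 2)).

Lemma nrm_nonneg n z : 0 <= nrm n z.
Proof. apply sqrt_pos. Qed.

Lemma sumR_minus k g h : sumR k (fun c => g c - h c) = sumR k g - sumR k h.
Proof. induction k; cbn [sumR]; [lra|]. rewrite IHk; lra. Qed.

Lemma nrm_le_bound n z b : 0 <= b -> (forall c, (c < n)%nat -> Rabs (z c) <= b) -> nrm n z <= sqrt (INR n) * b.
Proof.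
  intros Hb H. pose proof (vdist_le_bound n z (fun _ => 0) b Hb).
  unfold vdist, nrm in *. rewrite (sumR_ext _ (fun c => z c ^2) (fun c => (z c - 0)^2)).
  apply H0. intros. rewrite Rminus_0_r; auto. intros; rewrite Rminus_0_r; auto.
Qed.

Lemma vnorm_nrm n z : vnorm n z = nrm n z.
Proof. unfold vnorm, vdist, nrm. f_equal. apply sumR_ext; intros; ring. Qed.

Lemma deriv_sumR (g g' : nat -> R -> R) t k :
  (forall c, (c < k)%nat -> derivable_pt_lim (g c) t (g' c t)) ->
  derivable_pt_lim (fun s => sumR k (fun c => g c s)) t (sumR k (fun c => g' c t)).
Proof.
  induction k; intros H; cbn [sumR].
  - apply derivable_pt_lim_const.
  - apply (derivable_pt_lim_plus (fun s => sumR k (fun c => g c s)) (g k)).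
    apply IHk; intros; apply H; lia. apply H; lia.
Qed.

Lemma unif_rc (F : nat -> R -> R) n :
  (forall c, (c < n)%nat -> forall eps, 0 < eps -> exists delta, 0 < delta /\
       forall s, 0 <= s < delta -> Rabs (F c s) < eps) ->
  forall eps, 0 < eps -> exists delta, 0 < delta /\
       forall s, 0 <= s < delta -> forall c, (c < n)%nat -> Rabs (F c s) < eps.
Proof.
  induction n; intros H eps He.
  - exists 1; split; [lra|]. intros; lia.
  - destruct (IHn (fun c Hc => H c ltac:(lia)) eps He) as [d1 [Hd1 H1]].
    destruct (H n ltac:(lia) eps He) as [d2 [Hd2 H2]].
    exists (Rmin d1 d2); split. apply Rmin_pos; auto.
    intros s Hs c Hc. pose proof (Rmin_l d1 d2); pose proof (Rmin_r d1 d2).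
    destruct (Nat.eq_dec c n). subst; apply H2; lra. apply H1; [lra|lia].
Qed.

Lemma eps_arg A B C : 0 <= C -> (forall eta, 0 < eta -> A <= B + C * eta) -> A <= B.
Proof.
  intros HC H. apply Rle_plus_epsilon. intros e He.
  specialize (H (e / (C + 1))). 
  assert (0 < e / (C+1)) by (apply Rdiv_lt_0_compat; lra).
  specialize (H H0). assert (C * (e / (C+1)) <= e).
  { unfold Rdiv. rewrite <- Rmult_assoc. apply (Rmult_le_reg_r (C+1)); [lra|].
    rewrite Rmult_assoc, Rinv_l by lra. nra. }
  lra.
Qed.

Lemma speed n (X DX : R -> vec) M :
  (forall c, (c < n)%nat -> forall s, 0 < s -> derivable_pt_lim (fun s => X s c) s (DX s c)) ->
  (forall s, 0 < s -> nrm n (DX s) <= M) ->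
  (forall c, (c < n)%nat -> forall eps, 0 < eps -> exists delta, 0 < delta /\
       forall s, 0 <= s < delta -> Rabs (X s c - X 0 c) < eps) ->
  forall t, 0 <= t -> vdist n (X t) (X 0) <= M * t.
Proof.
  intros HD HB HRC.
  assert (Hmid : forall a t, 0 < a < t -> vdist n (X t) (X a) <= M * (t - a)).
  { intros a t Ha.
    set (u := fun c => X t c - X a c).
    destruct (MVT_cor2 (fun s => sumR n (fun c => u c * X s c)) (fun s => sumR n (fun c => u c * DX s c)) a t ltac:(lra)) as [xi [Hxi1 Hxi2]].
    { intros s Hs. apply (deriv_sumR (fun c s => u c * X s c) (fun c s => u c * DX s c)).
      intros c Hc. apply (derivable_pt_lim_scal (fun s => X s c)). apply HD; auto; lra. }
    rewrite <- sumR_minus in Hxi1.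
    rewrite (sumR_ext _ _ (fun c => u c ^2)) in Hxi1 by (intros; unfold u; ring).
    pose proof (CS' n u (DX xi)). pose proof (HB xi ltac:(lra)). unfold nrm in *.
    fold (vdist n (X t) (X a)) in *. 
    assert (Hq : sumR n (fun c => u c ^2) = vdist n (X t) (X a) ^2).
    { unfold vdist. rewrite pow2_sqrt. reflexivity. apply sumR_nonneg; intros; apply pow2_ge_0. }
    change (sqrt (sumR n (fun c => u c ^ 2))) with (vdist n (X t) (X a)) in H.
    pose proof (vdist_nonneg n (X t) (X a)).
    pose proof (sqrt_pos (sumR n (fun c => DX xi c ^ 2))).
    assert (vdist n (X t) (X a) ^2 <= vdist n (X t) (X a) * (M * (t - a))).
    { rewrite <- Hq, Hxi1. replace (vdist n (X t) (X a) * (M * (t - a))) with ((vdist n (X t) (X a) * M) * (t - a)) by ring.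
      apply Rmult_le_compat_r; [lra|]. eapply Rle_trans; [apply H|]. apply Rmult_le_compat_l; auto. }
    assert (0 <= M) by lra.
    destruct (Rle_or_lt (vdist n (X t) (X a)) (M * (t - a))) as [|Hlt]; auto.
    assert (0 <= M * (t-a)) by (apply Rmult_le_pos; lra).
    assert (vdist n (X t) (X a) * (M * (t - a)) < vdist n (X t) (X a) * vdist n (X t) (X a)) by (apply Rmult_lt_compat_l; lra).
    nra. }
  intros t Ht. destruct (Req_dec t 0) as [->|Ht0].
  { rewrite vdist_eq0 by auto. lra. }
  apply (eps_arg _ _ (sqrt (INR n)) (sqrt_pos _)). intros eta Heta.
  destruct (unif_rc (fun c s => X s c - X 0 c) n HRC eta Heta) as [d [Hd Hdd]].
  set (a := Rmin (d/2) (t/2)).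
  assert (0 < a) by (apply Rmin_pos; lra).
  assert (a <= d/2) by apply Rmin_l. assert (a <= t/2) by apply Rmin_r.
  pose proof (Hmid a t ltac:(lra)).
  assert (vdist n (X a) (X 0) <= sqrt (INR n) * eta).
  { apply vdist_le_bound; [lra|]. intros c Hc. left. apply (Hdd a); [lra|auto]. }
  pose proof (vdist_tri n (X t) (X a) (X 0)).
  assert (0 <= M). { pose proof (HB t ltac:(lra)). pose proof (nrm_nonneg n (DX t)). lra. }
  nra.
Qed.

Lemma dsq f x l : derivable_pt_lim f x l -> derivable_pt_lim (fun s => f s ^2) x (2 * f x * l).
Proof.
  intros H. apply is_derive_Reals in H. apply is_derive_Reals.
  pose proof (is_derive_pow f 2 x l H). simpl in H0.
  replace (2 * f x * l) with ((1+1) * l * (f x * 1)) by ring. exact H0.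
Qed.

Lemma exp_le_mono x y : x <= y -> exp x <= exp y.
Proof. intros [H|H]. left; apply exp_increasing; auto. subst; lra. Qed.

Lemma gron0 (D D' : R -> R) L a t : a < t ->
  (forall s, a <= s <= t -> derivable_pt_lim D s (D' s)) ->
  (forall s, a < s < t -> D' s <= L * D s) -> D a <= 0 -> D t <= 0.
Proof.
  intros Hat HD HB Ha.
  destruct (MVT_cor2 (fun s => D s * exp (- L * s)) (fun s => D' s * exp (-L * s) + D s * (- L * exp (-L * s))) a t Hat) as [xi [H1 H2]].
  { intros s Hs. apply (derivable_pt_lim_mult D (fun s => exp (- L * s))).
    apply HD; auto. apply is_derive_Reals. auto_derive; auto. ring. }
  pose proof (HB xi H2). pose proof (exp_pos (-L * xi)). pose proof (exp_pos (-L*a)). pose proof (exp_pos (-L*t)).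
  assert ((D' xi * exp (- L * xi) + D xi * (- L * exp (- L * xi))) <= 0).
  { replace (D' xi * exp (- L * xi) + D xi * (- L * exp (- L * xi))) with ((D' xi - L * D xi) * exp (-L * xi)) by ring.
    apply Rmult_le_0_r; lra. }
  assert (D t * exp (- L * t) <= 0).
  { assert (D a * exp (-L*a) <= 0) by (apply Rmult_le_0_r; lra). nra. }
  destruct (Rle_or_lt (D t) 0); auto. assert (0 < D t * exp (-L*t)) by (apply Rmult_lt_0_compat; lra). lra.
Qed.

Lemma sqrt_plus_sq x e : 0 <= x -> 0 <= e -> sqrt (x + e^2) <= sqrt x + e.
Proof.
  intros Hx He. apply sqrt_sq_le. pose proof (sqrt_pos x); lra.
  rewrite pow2_sqrt by nra. replace ((sqrt x + e)^2) with (sqrt x ^2 + 2 * e * sqrt x + e^2) by ring.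
  rewrite pow2_sqrt by auto. pose proof (sqrt_pos x). nra.
Qed.

Definition phi (L t : R) := exp (L * t) - 1 - L * t.

Lemma gron n (Z DZ : R -> vec) L K :
  0 < L -> 0 <= K ->
  (forall c, (c < n)%nat -> forall s, 0 < s -> derivable_pt_lim (fun s => Z s c) s (DZ s c)) ->
  (forall c, (c < n)%nat -> forall eps, 0 < eps -> exists delta, 0 < delta /\
       forall s, 0 <= s < delta -> Rabs (Z s c) < eps) ->
  (forall c, (c < n)%nat -> Z 0 c = 0) ->
  forall t, 0 <= t ->
  (forall s, 0 < s < t -> nrm n (DZ s) <= L * nrm n (Z s) + K * s) ->
  nrm n (Z t) <= K * phi L t / L^2.
Proof.
  intros HL HK HD HRC H0 t Ht HB.
  assert (Hphi : forall s, 0 <= phi L s) by (intros; unfold phi; pose proof (exp_ineq1_le (L*s)); lra).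
  assert (HKp : 0 <= K * phi L t / L^2).
  { unfold Rdiv. apply Rmult_le_pos. apply Rmult_le_pos; auto. left; apply Rinv_0_lt_compat; nra. }
  destruct (Req_dec t 0) as [->|Ht0].
  { unfold nrm. rewrite (sumR_ext _ _ (fun _ => 0)). rewrite sumR_const, Rmult_0_r, sqrt_0. auto.
    intros c Hc; rewrite H0; auto; ring. }
  apply (eps_arg _ _ (exp (L * t) * (1 + sqrt (INR n)))).
  { apply Rmult_le_pos. left; apply exp_pos. pose proof (sqrt_pos (INR n)); lra. }
  intros eta Heta.
  destruct (unif_rc (fun c s => Z s c) n HRC eta Heta) as [d [Hd Hdd]].
  set (a := Rmin (d/2) (t/2)).
  assert (0 < a) by (apply Rmin_pos; lra).
  assert (a <= d/2) by apply Rmin_l. assert (a <= t/2) by apply Rmin_r.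
  assert (Hza : nrm n (Z a) <= sqrt (INR n) * eta).
  { apply nrm_le_bound; [lra|]. intros c Hc. left. apply (Hdd a); [lra|auto]. }
  set (c0 := eta + nrm n (Z a)).
  set (Q := fun s => sumR n (fun c => Z s c ^2)).
  set (Q' := fun s => sumR n (fun c => 2 * Z s c * DZ s c)).
  assert (HQ : forall s, 0 <= Q s) by (intros; apply sumR_nonneg; intros; apply pow2_ge_0).
  set (r := fun s => sqrt (Q s + eta^2)).
  set (r' := fun s => / (2 * sqrt (Q s + eta^2)) * Q' s).
  set (G := fun s => exp (L*(s-a)) * c0 + K * phi L s / L^2).
  set (G' := fun s => L * exp (L*(s-a)) * c0 + K * (L * exp (L*s) - L) / L^2).
  assert (HDr : forall s, 0 < s -> derivable_pt_lim r s (r' s)).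
  { intros s Hs. unfold r, r'.
    apply (derivable_pt_lim_comp (fun s => Q s + eta^2) sqrt).
    - replace (Q' s) with (Q' s + 0) by ring. apply (derivable_pt_lim_plus Q (fun _ => eta^2)).
      + unfold Q, Q'. apply (deriv_sumR (fun c s => Z s c ^2) (fun c s => 2 * Z s c * DZ s c)).
        intros c Hc. apply dsq. apply HD; auto.
      + apply derivable_pt_lim_const.
    - apply derivable_pt_lim_sqrt. pose proof (HQ s). nra. }
  assert (HDG : forall s, derivable_pt_lim G s (G' s)).
  { intros s. unfold G, G', phi. apply is_derive_Reals. auto_derive; auto.
    replace (s + - a) with (s - a) by ring. field. lra. }
  assert (Hrpos : forall s, 0 < sqrt (Q s + eta^2)).
  { intros. apply sqrt_lt_R0. pose proof (HQ s). nra. }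
  assert (Hmain : r t - G t <= 0).
  { apply (gron0 (fun s => r s - G s) (fun s => r' s - G' s) L a t ltac:(lra)).
    - intros s Hs. apply derivable_pt_lim_minus. apply HDr; lra. apply HDG.
    - intros s Hs.
      assert (HG : G' s - L * G s = K * s).
      { unfold G', G, phi. field. lra. }
      assert (Hr : r' s <= L * r s + K * s).
      { unfold r'. 
        assert (HQ' : Q' s = 2 * sumR n (fun c => Z s c * DZ s c)).
        { unfold Q'. rewrite <- sumR_scal. apply sumR_ext; intros; ring. }
        rewrite HQ'.
        pose proof (CS' n (Z s) (DZ s)) as HCS.
        fold (nrm n (Z s)) in HCS. fold (nrm n (DZ s)) in HCS.
        assert (nrm n (Z s) <= r s).
        { unfold nrm, r. apply sqrt_le_1_alt. fold (Q s). pose proof (pow2_ge_0 eta). lra. }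
        pose proof (HB s ltac:(lra)). pose proof (nrm_nonneg n (Z s)). pose proof (nrm_nonneg n (DZ s)).
        pose proof (Hrpos s) as Hrp. fold (r s) in Hrp |- *.
        replace (/ (2 * r s) * (2 * sumR n (fun c => Z s c * DZ s c))) with (sumR n (fun c => Z s c * DZ s c) / r s) by (field; lra).
        apply Rle_trans with (nrm n (DZ s)).
        { apply (Rmult_le_reg_r (r s)); auto. unfold Rdiv. rewrite Rmult_assoc, Rinv_l by lra. nra. }
        nra. }
      lra.
    - unfold r, G. pose proof (sqrt_plus_sq (Q a) eta (HQ a) ltac:(lra)).
      match goal with H: sqrt (Q a + _) <= _ |- _ => fold (nrm n (Z a)) in H end. replace (L * (a - a)) with 0 by ring. rewrite exp_0.
      assert (0 <= K * phi L a / L^2).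
      { unfold Rdiv. apply Rmult_le_pos. apply Rmult_le_pos; auto. left; apply Rinv_0_lt_compat; nra. }
      unfold c0. assert (sqrt (Q a) = nrm n (Z a)) by reflexivity. lra. }
  assert (nrm n (Z t) <= r t).
  { unfold nrm, r. apply sqrt_le_1_alt. fold (Q t). pose proof (pow2_ge_0 eta). lra. }
  assert (exp (L*(t-a)) <= exp (L*t)) by (apply exp_le_mono; nra).
  unfold G in Hmain. unfold c0 in Hmain.
  assert (0 <= eta + nrm n (Z a)) by (pose proof (nrm_nonneg n (Z a)); lra).
  assert (exp (L * (t - a)) * (eta + nrm n (Z a)) <= exp (L*t) * (eta + sqrt (INR n) * eta)).
  { apply Rmult_le_compat; try lra. left; apply exp_pos. }
  nra.
Qed.

Lemma walk_app nbr j a b p q : walk nbr j a p -> walk nbr a b q -> walk nbr j b (p + q).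
Proof.
  revert b. induction q; intros b H1 H2; simpl in H2.
  - subst. rewrite Nat.add_0_r. auto.
  - destruct H2 as [l0 [Hl Hw]]. rewrite Nat.add_succ_r. simpl. exists l0. split; auto.
Qed.

Lemma walk_lt N nbr j i k : graph_ok N nbr -> (i < N)%nat -> walk nbr j i k -> (j < N)%nat.
Proof.
  intros HG. revert i. induction k; intros i Hi Hw; simpl in Hw.
  - subst; auto.
  - destruct Hw as [l0 [Hl Hw]]. apply (IHk l0); auto. apply (HG i Hi); auto.
Qed.

Lemma min_layer nbr j i k : walk nbr j i k -> exists k', (k' <= k)%nat /\ layer nbr i k' j.
Proof.
  induction k as [k IH] using (well_founded_induction Wf_nat.lt_wf). intros Hw.
  destruct (classic (exists k', (k' < k)%nat /\ walk nbr j i k')) as [[k' [Hk' Hw']]|Hn].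
  - destruct (IH k' Hk' Hw') as [k'' [H1 H2]]. exists k''; split; auto; lia.
  - exists k; split; auto. split; auto. intros k' Hk' Hw'. apply Hn; eauto.
Qed.

Lemma ball_walk nbr i m j : ball_layer nbr i m j -> exists p, (p <= m)%nat /\ walk nbr j i p.
Proof. intros [k' [Hk [Hw _]]]. eauto. Qed.

Lemma walk_ball nbr i m j p : (p <= m)%nat -> walk nbr j i p -> ball_layer nbr i m j.
Proof. intros Hp Hw. destruct (min_layer _ _ _ _ Hw) as [k' [H1 H2]]. exists k'; split; auto; lia. Qed.

Lemma nbr_walk nbr mu nu : In mu (nbr nu) -> walk nbr mu nu 1.
Proof. intros H. simpl. exists mu; auto. Qed.

Lemma struct_lemma n nbr f I xG m i li chi :
  (1 <= m)%nat -> ref_traj n nbr f I xG m i li chi ->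
  forall nu, ball_layer nbr i m nu ->
  ((solves_ode n nbr f chi nu /\ (forall c, (c < n)%nat -> chi nu 0 c = xG (li nu) c)) /\
     forall mu, In mu (nbr nu) -> ball_layer nbr i m mu) \/
  (forall t, 0 <= t -> forall c, (c < n)%nat -> chi nu t c = xG (li nu) c).
Proof.
  intros Hm [H1 H2] nu Hnu.
  destruct (classic (exists j, layer nbr i (S m) j)) as [Hex|Hno].
  - destruct (H2 Hex) as [Hev Hfr].
    destruct Hnu as [k' [Hk' Hl]].
    destruct (Nat.eq_dec k' m) as [->|Hne].
    + right. apply Hfr; auto.
    + left. split. apply Hev. exists k'; split; auto; lia.
      intros mu Hmu. destruct Hl as [Hw _].
      pose proof (walk_app _ _ _ _ _ _ (nbr_walk _ _ _ Hmu) Hw).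
      refine (walk_ball _ _ _ _ (1 + k')%nat _ H). clear -Hk' Hne. lia.
  - left. split.
    + apply H1; auto. intros j Hj; apply Hno; eauto.
    + intros mu Hmu. destruct (ball_walk _ _ _ _ Hnu) as [p [Hp Hw]].
      pose proof (walk_app _ _ _ _ _ _ (nbr_walk _ _ _ Hmu) Hw).
      destruct (min_layer _ _ _ _ H) as [k' [Hk' Hl]].
      destruct (Nat.eq_dec k' (S m)) as [->|Hne].
      * exfalso; apply Hno; eauto.
      * exists k'; split; auto; lia.
Qed.

Lemma in_fold_max x l : In x l -> (x <= fold_right Nat.max 0 l)%nat.
Proof. induction l; simpl; intros H; [contradiction|]. destruct H; subst; lia || (specialize (IHl H); lia). Qed.

Lemma len_le_Nmax N nbr k : (k < N)%nat -> (length (nbr k) <= Nmax N nbr)%nat.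
Proof. intros Hk. unfold Nmax. apply in_fold_max. apply in_map_iff. exists k; split; auto. apply in_seq; lia. Qed.

Lemma sdist_bound n (A B : nat -> vec) (L : list nat) b : 0 <= b ->
  (forall nu, In nu L -> vdist n (A nu) (B nu) <= b) ->
  sdist n (map A L) (map B L) <= sqrt (INR (length L)) * b.
Proof.
  intros Hb H. unfold sdist.
  replace (sqrt (INR (length L)) * b) with (sqrt (INR (length L) * b^2)).
  2:{ rewrite sqrt_mult by (auto using pos_INR, pow2_ge_0). rewrite sqrt_pow2 by auto. auto. }
  apply sqrt_le_1_alt. induction L as [|x L IH]; [simpl; lra|].
  cbn [map combine fold_right length fst snd]. rewrite S_INR.
  pose proof (H x (or_introl eq_refl)). pose proof (vdist_nonneg n (A x) (B x)).
  assert (vdist n (A x) (B x) ^2 <= b^2) by nra.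
  assert (fold_right Rplus 0 (map (fun p => vdist n (fst p) (snd p) ^ 2) (combine (map A L) (map B L))) <= INR (length L) * b^2).
  { apply IH. intros; apply H; simpl; auto. }
  lra.
Qed.

Lemma phi_conv L t T : 0 < L -> 0 <= t <= T -> 0 < T -> phi L t * T <= t * phi L T.
Proof.
  intros HL Ht HT. unfold phi.
  set (z := exp (L*t)).
  assert (E1 : exp (L*T) = z * exp (L*(T-t))) by (unfold z; rewrite <- exp_plus; f_equal; ring).
  assert (E2 : 1 = z * exp (-(L*t))) by (unfold z; rewrite <- exp_plus; replace (L*t + -(L*t)) with 0 by ring; rewrite exp_0; auto).
  pose proof (exp_ineq1_le (L*(T-t))). pose proof (exp_ineq1_le (-(L*t))).
  assert (0 < z) by apply exp_pos.
  assert (z * (1 + L*(T-t)) <= exp (L*T)) by (rewrite E1; apply Rmult_le_compat_l; lra).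
  assert (z * (1 - L*t) <= 1) by (rewrite E2 at 2; apply Rmult_le_compat_l; lra).
  assert (t * (z * (1 + L*(T-t))) <= t * exp (L*T)) by (apply Rmult_le_compat_l; lra).
  assert ((T - t) * (z * (1 - L*t)) <= (T-t) * 1) by (apply Rmult_le_compat_l; lra).
  nra.
Qed.

Lemma phi_conv_strict L t T : 0 < L -> 0 < t < T -> phi L t * T < t * phi L T.
Proof.
  intros HL Ht. unfold phi.
  set (z := exp (L*t)).
  assert (E1 : exp (L*T) = z * exp (L*(T-t))) by (unfold z; rewrite <- exp_plus; f_equal; ring).
  assert (E2 : 1 = z * exp (-(L*t))) by (unfold z; rewrite <- exp_plus; replace (L*t + -(L*t)) with 0 by ring; rewrite exp_0; auto).
  assert (1 + L*(T-t) < exp (L*(T-t))) by (apply exp_ineq1; nra). pose proof (exp_ineq1_le (-(L*t))).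
  assert (0 < z) by apply exp_pos.
  assert (z * (1 + L*(T-t)) < exp (L*T)) by (rewrite E1; apply Rmult_lt_compat_l; lra).
  assert (z * (1 - L*t) <= 1) by (rewrite E2 at 2; apply Rmult_le_compat_l; lra).
  assert (t * (z * (1 + L*(T-t))) < t * exp (L*T)) by (apply Rmult_lt_compat_l; lra).
  assert ((T - t) * (z * (1 - L*t)) <= (T-t) * 1) by (apply Rmult_le_compat_l; lra).
  nra.
Qed.


Lemma drift N n nbr f M L1 L2 I xG m i li chi :
  graph_ok N nbr -> drift_ok N n nbr f M L1 L2 -> (1 <= m)%nat -> (i < N)%nat ->
  ref_traj n nbr f I xG m i li chi ->
  forall nu, ball_layer nbr i m nu -> forall s, 0 <= s ->
  vdist n (chi nu s) (xG (li nu)) <= M * s.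
Proof.
  intros HG HD Hm Hi Hr nu Hnu s Hs.
  assert (HnuN : (nu < N)%nat).
  { destruct (ball_walk _ _ _ _ Hnu) as [p [_ Hw]]. eapply walk_lt; eauto. }
  assert (HM : 0 <= M).
  { destruct (HD nu HnuN) as [Hb _]. specialize (Hb (fun _ => 0) (map (fun _ => fun _ => 0) (nbr nu)) ltac:(apply length_map)).
    unfold vnorm in Hb. pose proof (vdist_nonneg n (f nu (fun _ => 0) (map (fun _ => fun _ => 0) (nbr nu))) (fun _ => 0)). lra. }
  destruct (struct_lemma n nbr f I xG m i li chi Hm Hr nu Hnu) as [[[[Hd Hrc] Hinit] _]|Hfr].
  - replace (vdist n (chi nu s) (xG (li nu))) with (vdist n (chi nu s) (chi nu 0)).
    2:{ unfold vdist. f_equal. apply sumR_ext. intros c Hc. rewrite Hinit; auto. }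
    apply (speed n (chi nu) (fun s => f nu (chi nu s) (map (fun mu => chi mu s) (nbr nu))) M); auto.
    intros u Hu. rewrite <- vnorm_nrm. apply (HD nu HnuN). apply length_map.
  - rewrite vdist_eq0. nra. intros c Hc. apply Hfr; auto.
Qed.

Theorem lemma4 (N n : nat) (nbr : nat -> list nat) (f : nat -> vec -> list vec -> vec)
    (M L1 L2 : R) (I : Type) (Cells : I -> vec -> Prop) (xG : I -> vec) (m : nat)
    (i l : nat) (li ll : nat -> I) (chi_i chi_l : nat -> R -> vec) (tstar : R) :
  graph_ok N nbr ->
  0 < M -> 0 < L1 -> 0 < L2 ->
  drift_ok N n nbr f M L1 L2 ->
  @cell_decomposition n I Cells xG ->
  (1 <= m)%nat ->
  (i < N)%nat -> In l (nbr i) ->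
  @consistent I nbr m i l li ll ->
  @ref_traj n nbr f I xG m i li chi_i ->
  @ref_traj n nbr f I xG m l ll chi_l ->
  0 < tstar ->
  exp (L2 * tstar) - (L2 + L2 ^ 2 / (L1 * sqrt (INR (Nmax N nbr)))) * tstar - 1 = 0 ->
  forall k, ball_layer nbr l (m - 1) k ->
  forall t, 0 <= t <= tstar ->
    vdist n (chi_i k t) (chi_l k t) <= M * t.
Proof.
  intros HG HM HL1 HL2 HD _ Hm Hi Hl Hcons Hri Hrl Hts Heq k Hk t Ht.
  assert (HlN : (l < N)%nat) by (apply (HG i Hi); auto).
  assert (HNm : (1 <= Nmax N nbr)%nat).
  { pose proof (len_le_Nmax N nbr i Hi). destruct (nbr i) eqn:E; [contradiction|]. simpl in H. lia. }
  set (sN := sqrt (INR (Nmax N nbr))).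
  assert (HsN : 0 < sN). { apply sqrt_lt_R0. apply lt_0_INR. lia. }
  set (e := fun nu s => vdist n (chi_i nu s) (chi_l nu s)).
  pose proof (drift N n nbr f M L1 L2 I xG m i li chi_i HG HD Hm Hi Hri) as Dri.
  pose proof (drift N n nbr f M L1 L2 I xG m l ll chi_l HG HD Hm HlN Hrl) as Drl.
  pose proof (struct_lemma n nbr f I xG m i li chi_i Hm Hri) as Si.
  pose proof (struct_lemma n nbr f I xG m l ll chi_l Hm Hrl) as Sl.
  assert (LtN : forall nu, ball_layer nbr i m nu -> (nu < N)%nat).
  { intros nu Hnu. destruct (ball_walk _ _ _ _ Hnu) as [p [_ Hw]]. exact (walk_lt N nbr nu i p HG Hi Hw). }
  assert (Tri : forall nu s, ball_layer nbr i m nu -> ball_layer nbr l m nu ->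
     e nu s <= vdist n (chi_i nu s) (xG (li nu)) + vdist n (chi_l nu s) (xG (ll nu))).
  { intros nu s H1 H2. unfold e. rewrite (Hcons nu H1 H2). rewrite (vdist_sym n (chi_l nu s)). apply vdist_tri. }
  assert (Base : forall nu s, ball_layer nbr i m nu -> ball_layer nbr l m nu -> 0 <= s -> e nu s <= 2 * M * s).
  { intros nu s H1 H2 Hs. pose proof (Tri nu s H1 H2). pose proof (Dri nu H1 s Hs). pose proof (Drl nu H2 s Hs). lra. }
  assert (Step : forall lam T, 0 <= lam -> 0 < T ->
     (forall mu, ball_layer nbr i m mu -> ball_layer nbr l m mu -> forall s, 0 <= s < T -> e mu s <= lam * M * s) ->
     forall nu, ball_layer nbr i m nu -> ball_layer nbr l m nu -> forall s, 0 <= s <= T ->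
     e nu s <= Rmax (M * s) (L1 * sN * lam * M * phi L2 s / L2^2)).
  { intros lam T Hlam HT HP nu H1 H2 s Hs.
    destruct (Si nu H1) as [[[[Hdi Hrci] Hini] Hnbi]|Hfi].
    - destruct (Sl nu H2) as [[[[Hdl Hrcl] Hinl] Hnbl]|Hfl].
      + apply Rle_trans with (L1 * sN * lam * M * phi L2 s / L2^2); [|apply Rmax_r].
        assert (HnuN : (nu < N)%nat) by auto.
        set (Fi := fun u => f nu (chi_i nu u) (map (fun mu => chi_i mu u) (nbr nu))).
        set (Fl := fun u => f nu (chi_l nu u) (map (fun mu => chi_l mu u) (nbr nu))).
        pose proof (Hcons nu H1 H2) as Hc.
        apply (gron n (fun u c => chi_i nu u c - chi_l nu u c) (fun u c => Fi u c - Fl u c) L2 (L1 * sN * lam * M)); auto.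
        * apply Rmult_le_pos; [|lra]. apply Rmult_le_pos; [|lra]. apply Rmult_le_pos; lra.
        * intros c Hcn u Hu. apply (derivable_pt_lim_minus (fun u => chi_i nu u c) (fun u => chi_l nu u c)).
          apply Hdi; auto. apply Hdl; auto.
        * intros c Hcn eps Heps.
          destruct (Hrci c Hcn (eps/2) ltac:(lra)) as [d1 [Hd1 Hd1']].
          destruct (Hrcl c Hcn (eps/2) ltac:(lra)) as [d2 [Hd2 Hd2']].
          exists (Rmin d1 d2). split. apply Rmin_pos; auto.
          intros u Hu. pose proof (Rmin_l d1 d2). pose proof (Rmin_r d1 d2).
          specialize (Hd1' u ltac:(lra)). specialize (Hd2' u ltac:(lra)).
          rewrite Hini, Hc in Hd1' by auto. rewrite Hinl in Hd2' by auto.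
          replace (chi_i nu u c - chi_l nu u c) with ((chi_i nu u c - xG (ll nu) c) - (chi_l nu u c - xG (ll nu) c)) by ring.
          eapply Rle_lt_trans. apply Rabs_triang. rewrite Rabs_Ropp. lra.
        * intros c Hcn. rewrite Hini, Hinl, Hc by auto. ring.
        * lra.
        * intros u Hu.
          change (nrm n (fun c => Fi u c - Fl u c)) with (vdist n (Fi u) (Fl u)).
          change (nrm n (fun c => chi_i nu u c - chi_l nu u c)) with (e nu u).
          destruct (HD nu HnuN) as [_ [HL1' HL2']].
          pose proof (vdist_tri n (Fi u) (f nu (chi_l nu u) (map (fun mu => chi_i mu u) (nbr nu))) (Fl u)).
          pose proof (HL2' (chi_i nu u) (chi_l nu u) (map (fun mu => chi_i mu u) (nbr nu)) ltac:(apply length_map)).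
          pose proof (HL1' (chi_l nu u) (map (fun mu => chi_i mu u) (nbr nu)) (map (fun mu => chi_l mu u) (nbr nu)) ltac:(apply length_map) ltac:(apply length_map)).
          assert (Hsd : sdist n (map (fun mu => chi_i mu u) (nbr nu)) (map (fun mu => chi_l mu u) (nbr nu)) <= sN * (lam * M * u)).
          { eapply Rle_trans. apply (sdist_bound n (fun mu => chi_i mu u) (fun mu => chi_l mu u) (nbr nu) (lam * M * u)).
            apply Rmult_le_pos; [apply Rmult_le_pos|]; lra.
            intros mu Hmu. apply (HP mu (Hnbi mu Hmu) (Hnbl mu Hmu) u). lra.
            apply Rmult_le_compat_r. apply Rmult_le_pos; [apply Rmult_le_pos|]; lra.
            apply sqrt_le_1_alt. apply le_INR. apply len_le_Nmax; auto. }
          fold (Fi u) (Fl u) in *. unfold e.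
          assert (L1 * sdist n (map (fun mu => chi_i mu u) (nbr nu)) (map (fun mu => chi_l mu u) (nbr nu)) <= L1 * (sN * (lam * M * u))) by (apply Rmult_le_compat_l; lra).
          nra.
      + apply Rle_trans with (M * s); [|apply Rmax_l].
        pose proof (Tri nu s H1 H2). rewrite (vdist_eq0 n (chi_l nu s)) in H by (intros; apply Hfl; auto; lra).
        pose proof (Dri nu H1 s ltac:(lra)). lra.
    - apply Rle_trans with (M * s); [|apply Rmax_l].
      pose proof (Tri nu s H1 H2). rewrite (vdist_eq0 n (chi_i nu s)) in H by (intros; apply Hfi; auto; lra).
      pose proof (Drl nu H2 s ltac:(lra)). lra. }
  assert (Hphits : L1 * sN * phi L2 tstar = L2^2 * tstar).
  { unfold phi. fold sN in Heq.
    assert (L2 ^ 2 / (L1 * sN) * (L1 * sN) = L2^2) by (field; lra).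
    assert (exp (L2 * tstar) - L2 * tstar - 1 = L2 ^ 2 / (L1 * sN) * tstar) by lra.
    replace (L1 * sN * (exp (L2 * tstar) - 1 - L2 * tstar)) with (L1 * sN * (exp (L2 * tstar) - L2 * tstar - 1)) by ring.
    rewrite H0. field. lra. }
  assert (Conv : forall lam T s, 0 <= lam -> 0 < T -> 0 <= s <= T ->
     L1 * sN * lam * M * phi L2 s / L2^2 <= (lam * M * s) * (L1 * sN * phi L2 T / (L2^2 * T))).
  { intros lam T s Hlam HT Hs. pose proof (phi_conv L2 s T HL2 Hs HT).
    assert (0 <= L1 * sN * lam * M / (L2^2 * T)).
    { unfold Rdiv. apply Rmult_le_pos. repeat apply Rmult_le_pos; lra. left; apply Rinv_0_lt_compat; apply Rmult_lt_0_compat; [apply pow_lt|]; lra. }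
    replace (L1 * sN * lam * M * phi L2 s / L2^2) with ((L1 * sN * lam * M / (L2^2 * T)) * (phi L2 s * T)) by (field; lra).
    replace ((lam * M * s) * (L1 * sN * phi L2 T / (L2^2 * T))) with ((L1 * sN * lam * M / (L2^2 * T)) * (s * phi L2 T)) by (field; lra).
    apply Rmult_le_compat_l; auto. }
  assert (Hphinn : forall s, 0 <= phi L2 s) by (intros; unfold phi; pose proof (exp_ineq1_le (L2*s)); lra).
  assert (Iter : forall T, 0 < T < tstar -> forall mu, ball_layer nbr i m mu -> ball_layer nbr l m mu ->
     forall s, 0 <= s <= T -> e mu s <= M * s).
  { intros T HT.
    set (rho := L1 * sN * phi L2 T / (L2^2 * T)).
    assert (Hrho0 : 0 <= rho).
    { unfold rho, Rdiv. apply Rmult_le_pos. apply Rmult_le_pos; [nra|auto]. left; apply Rinv_0_lt_compat; apply Rmult_lt_0_compat; [apply pow_lt|]; lra. }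
    assert (Hrho1 : rho < 1).
    { pose proof (phi_conv_strict L2 T tstar HL2 HT).
      assert (HA : 0 < L2^2) by (apply pow_lt; lra).
      assert (Hx : L1*sN*phi L2 T < L2^2 * T).
      { apply (Rmult_lt_reg_r tstar); [lra|].
        assert (L1*sN*(phi L2 T * tstar) < L1*sN*(T*phi L2 tstar)) by (apply Rmult_lt_compat_l; [apply Rmult_lt_0_compat|]; lra).
        replace (L2^2*T*tstar) with (T*(L1*sN*phi L2 tstar)) by (rewrite Hphits; ring). lra. }
      unfold rho. apply (Rmult_lt_reg_r (L2^2*T)). apply Rmult_lt_0_compat; lra.
      replace (L1*sN*phi L2 T/(L2^2*T) * (L2^2*T)) with (L1*sN*phi L2 T) by (field; lra). lra. }
    assert (HK : forall k0, forall mu, ball_layer nbr i m mu -> ball_layer nbr l m mu ->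
       forall s, 0 <= s <= T -> e mu s <= Rmax 1 (2 * rho ^ k0) * M * s).
    { induction k0; intros mu H1 H2 s Hs.
      - simpl. replace (Rmax 1 (2 * 1)) with 2. apply Base; auto; lra.
        unfold Rmax. destruct (Rle_dec 1 (2*1)); lra.
      - set (lam := Rmax 1 (2 * rho ^ k0)) in *.
        assert (Hlam : 1 <= lam) by apply Rmax_l.
        pose proof (Step lam T ltac:(lra) ltac:(lra) ltac:(intros; apply IHk0; auto; lra) mu H1 H2 s Hs).
        pose proof (Conv lam T s ltac:(lra) ltac:(lra) Hs). fold rho in H0.
        assert (Hl2 : lam * rho <= Rmax 1 (2 * rho ^ S k0)).
        { unfold lam. unfold Rmax at 1. destruct (Rle_dec 1 (2 * rho ^ k0)).
          - apply Rle_trans with (2 * rho ^ S k0); [simpl; lra|apply Rmax_r].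
          - apply Rle_trans with 1; [nra|apply Rmax_l]. }
        assert (0 <= M * s) by nra.
        eapply Rle_trans; [apply H|]. apply Rmax_lub.
        + assert (1 <= Rmax 1 (2 * rho ^ S k0)) by apply Rmax_l. nra.
        + eapply Rle_trans; [apply H0|].
          replace (lam * M * s * rho) with ((lam * rho) * (M * s)) by ring.
          replace (Rmax 1 (2 * rho ^ S k0) * M * s) with (Rmax 1 (2 * rho ^ S k0) * (M * s)) by ring.
          apply Rmult_le_compat_r; auto. }
    destruct (pow_lt_1_zero rho ltac:(rewrite Rabs_pos_eq; lra) (1/2) ltac:(lra)) as [K0 HK0].
    specialize (HK0 K0 (le_n K0)). rewrite Rabs_pos_eq in HK0 by (apply pow_le; auto).
    intros mu H1 H2 s Hs. specialize (HK K0 mu H1 H2 s Hs).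
    replace (Rmax 1 (2 * rho ^ K0)) with 1 in HK. lra.
    unfold Rmax. destruct (Rle_dec 1 (2 * rho ^ K0)); lra. }
  assert (Fin : forall mu, ball_layer nbr i m mu -> ball_layer nbr l m mu -> forall s, 0 <= s < tstar -> e mu s <= 1 * M * s).
  { intros mu H1 H2 s Hs. destruct (Req_dec s 0) as [->|Hs0].
    - pose proof (Base mu 0 H1 H2 ltac:(lra)). lra.
    - rewrite Rmult_1_l. apply (Iter s ltac:(lra) mu H1 H2 s). lra. }
  destruct (ball_walk _ _ _ _ Hk) as [p [Hp Hw]].
  assert (Hki : ball_layer nbr i m k).
  { apply (walk_ball _ _ _ _ (p + 1)%nat). clear -Hp Hm; lia. apply (walk_app _ _ _ _ _ _ Hw). apply nbr_walk; auto. }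
  assert (Hkl : ball_layer nbr l m k) by (apply (walk_ball _ _ _ _ p); [clear -Hp; lia|auto]).
  pose proof (Step 1 tstar ltac:(lra) Hts Fin k Hki Hkl t Ht).
  pose proof (Conv 1 tstar t ltac:(lra) Hts Ht).
  replace (L1 * sN * phi L2 tstar / (L2 ^ 2 * tstar)) with 1 in H0.
  2:{ rewrite Hphits. field. nra. }
  fold e. eapply Rle_trans; [apply H|]. apply Rmax_lub; lra.
Qed.
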